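(* For every regular language $L \subseteq \Sigma^*$ over a finite alphabet $\Sigma$, the 2-overlap catenation closure $2\mathbb{OC}^*(L)$ is regular.
   Context: The 2-overlap catenation of strings $x, y \in \Sigma^*$ is $x \,\overline{\odot}^2\, y = \{ uvw \mid x = uv,\ y = vw,\ u,w \in \Sigma^*,\ v \in \Sigma^*,\ |v| \geq 2 \}$, extended to languages by $L_1 \,\overline{\odot}^2\, L_2 = \bigcup_{x\in L_1, y \in L_2} x \,\overline{\odot}^2\, y$. $2\mathbb{OC}^{(0)}(L) = L$, $2\mathbb{OC}^{(i+1)}(L) = 2\mathbb{OC}^{(i)}(L) \,\overline{\odot}^2\, 2\mathbb{OC}^{(i)}(L)$, and $2\mathbb{OC}^*(L) = \bigcup_{i \geq 0} 2\mathbb{OC}^{(i)}(L)$. *)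

(* Defs.v *)
From mathcomp Require Import all_boot.
Set Implicit Arguments. Unset Strict Implicit. Unset Printing Implicit Defensive.

Definition lang (Sigma : finType) := seq Sigma -> Prop.

Record dfa (Sigma : finType) := DFA {
  dfa_state : finType;
  dfa_s : dfa_state;
  dfa_fin : {set dfa_state};
  dfa_trans : dfa_state -> Sigma -> dfa_state }.

Definition dfa_accept (Sigma : finType) (A : dfa Sigma) (w : seq Sigma) : bool :=
  foldl (@dfa_trans _ A) (@dfa_s _ A) w \in @dfa_fin _ A.

Definition regular (Sigma : finType) (L : lang Sigma) : Prop :=
  exists A : dfa Sigma, forall w, L w <-> dfa_accept A w.

Definition overlap2 (Sigma : finType) (L1 L2 : lang Sigma) : lang Sigma :=
  fun z => exists u v w : seq Sigma,
    [/\ L1 (u ++ v), L2 (v ++ w), 2 <= size v & z = u ++ v ++ w].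

Fixpoint OC2_iter (Sigma : finType) (L : lang Sigma) (i : nat) : lang Sigma :=
  match i with
  | 0 => L
  | i'.+1 => overlap2 (OC2_iter L i') (OC2_iter L i')
  end.

Definition OC2_star (Sigma : finType) (L : lang Sigma) : lang Sigma :=
  fun z => exists i, OC2_iter L i z.

(* Main.v *)
Require Import Defs.
From mathcomp Require Import all_boot.
Set Implicit Arguments. Unset Strict Implicit. Unset Printing Implicit Defensive.

Inductive Scl (Sigma : finType) (L : lang Sigma) : seq Sigma -> Prop :=
| Sbase z : L z -> 2 <= size z -> Scl L z
| Sstep u v w : Scl L (u ++ v) -> L (v ++ w) -> 2 <= size v -> Scl L (u ++ v ++ w).

Lemma cat_eq_cat (T : Type) (a b c d : seq T) : a ++ b = c ++ d ->
  (exists t, c = a ++ t /\ b = t ++ d) \/ (exists t, a = c ++ t /\ d = t ++ b).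
Proof.
elim: a c => [|x a IH] [|y c] /=.
- by move=> ->; left; exists [::].
- by move=> ->; left; exists (y :: c).
- by move=> <-; right; exists (x :: a).
- case=> -> /IH [[t [-> ->]]|[t [-> ->]]]; [left|right]; by exists t.
Qed.

Lemma Scl_ov (Sigma : finType) (L : lang Sigma) u v w :
  Scl L (u ++ v) -> Scl L (v ++ w) -> 2 <= size v -> Scl L (u ++ v ++ w).
Proof.
move=> Huv Hy Hv; move Ey: (v ++ w) Hy => y Hy.
elim: Hy u v w Huv Ey Hv => [z Lz _ | u' v' w' Hs IH Ly Hv'] u v w Huv Ey Hv.
  by rewrite -Ey in Lz *; apply: Sstep.
rewrite catA in Ey.
case: (cat_eq_cat Ey) => [[t [Et Ew]]|[t [Ev Ew]]].
- have H := IH u v t Huv (esym Et) Hv.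
  have := @Sstep _ L (u ++ u') v' w'.
  rewrite -!catA; apply => //.
- rewrite Ev -!catA in Huv.
  rewrite Ew in Ly *.
  have := @Sstep _ L (u ++ u') (v' ++ t) w.
  rewrite -!catA; apply => //.
  by rewrite size_cat (leq_trans Hv') ?leq_addr.
Qed.

Lemma iter_mono (Sigma : finType) (L : lang Sigma) i j x :
  i <= j -> OC2_iter L i x -> 2 <= size x -> OC2_iter L j x.
Proof.
elim: j => [|j IH]; first by rewrite leqn0 => /eqP ->.
rewrite leq_eqVlt => /orP [/eqP -> //|] Hij Hx Hs.
exists [::], x, [::]; split; rewrite ?cats0 //; exact: IH.
Qed.

Lemma iter_S (Sigma : finType) (L : lang Sigma) i z :
  OC2_iter L i z -> L z \/ Scl L z.
Proof.
elim: i z => [|i IH] z /=; first by left.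
case=> u [v [w [H1 H2 Hv ->]]]; right.
have toS : forall x, OC2_iter L i x -> size v <= size x -> Scl L x.
  move=> x /IH [Lx|//] Hs; apply: Sbase => //; exact: leq_trans Hs.
apply: Scl_ov => //; [apply: (toS _ H1)|apply: (toS _ H2)]; by rewrite size_cat ?leq_addl ?leq_addr.
Qed.

Lemma S_iter (Sigma : finType) (L : lang Sigma) z :
  Scl L z -> exists i, OC2_iter L i z.
Proof.
elim => [x Lx _|u v w _ [i Hi] Ly Hv]; first by exists 0.
exists i.+1; exists u, v, w; split => //.
apply: (@iter_mono _ _ 0) => //; by rewrite size_cat (leq_trans Hv) ?leq_addr.
Qed.

Lemma S_pref (Sigma : finType) (L : lang Sigma) z :
  Scl L z <-> (L z /\ 2 <= size z) \/
    exists k a, [/\ k < size z, Scl L (take k z), a + 2 <= k & L (drop a z)].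
Proof.
split.
  elim => [x Lx Hx|u v w Huv IH Ly Hv]; first by left.
  case: w Ly => [|c w] Ly; first by rewrite cats0.
  right; exists (size (u ++ v)), (size u); split.
  - by rewrite catA !size_cat /= addnS ltnS leq_addr.
  - by rewrite catA take_size_cat.
  - by rewrite size_cat leq_add2l.
  - by rewrite drop_size_cat.
case=> [[Lz Hz]|[k [a [Hk Hs Ha Ld]]]]; first exact: Sbase.
have Hak : a < k by apply: leq_trans Ha; rewrite addn2.
have Hsz : size (take k z) = k by rewrite size_take Hk.
have E1 : take a z ++ drop a (take k z) = take k z.
  by rewrite -{1}(take_takel z (ltnW Hak)) cat_take_drop.
have E2 : drop a (take k z) ++ drop k z = drop a z.
  by rewrite -{3}(cat_take_drop k z) drop_cat Hsz Hak.
have := @Sstep _ L (take a z) (drop a (take k z)) (drop k z).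
rewrite E1 E2 cat_take_drop; apply => //.
by rewrite size_drop Hsz leq_subRL ?(ltnW Hak) // addnC.
Qed.

Definition run (Sigma : finType) (A : dfa Sigma) q w := foldl (@dfa_trans _ A) q w.

Definition st (Sigma : finType) (A : dfa Sigma) :=
  (dfa_state A * bool * bool * {set dfa_state A} * {set dfa_state A} * {set dfa_state A})%type.

Definition accS (Sigma : finType) (A : dfa Sigma) (x : st A) : bool :=
  let '(d, b1, b2, T1, T2, G) := x in
  (b2 && (d \in dfa_fin A)) || [exists q in G, q \in dfa_fin A].

Definition stp (Sigma : finType) (A : dfa Sigma) (x : st A) (c : Sigma) : st A :=
  let '(d, b1, b2, T1, T2, G) := x in
  let f := fun q => dfa_trans q c in
  (f d, true, b1, f @: (dfa_s A |: T1), f @: T1,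
   f @: G :|: (if accS x then f @: T2 else set0)).

Definition finb (Sigma : finType) (A : dfa Sigma) (x : st A) : bool :=
  let '(d, b1, b2, T1, T2, G) := x in
  (d \in dfa_fin A) || [exists q in G, q \in dfa_fin A].

Definition bigA (Sigma : finType) (A : dfa Sigma) : dfa Sigma :=
  @DFA Sigma (st A) (dfa_s A, false, false, set0, set0, set0)
    [set x | finb x] (@stp _ A).

Definition Inv (Sigma : finType) (L : lang Sigma) (A : dfa Sigma) p (x : st A) :=
  let '(d, b1, b2, T1, T2, G) := x in
  [/\ d = run (dfa_s A) p, b1 = (0 < size p), b2 = (1 < size p) &
   [/\ forall q, q \in T1 <-> exists2 a, a < size p & q = run (dfa_s A) (drop a p),
   forall q, q \in T2 <-> exists2 a, a.+1 < size p & q = run (dfa_s A) (drop a p)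
  & forall q, q \in G <-> exists k a, [/\ k < size p, Scl L (take k p), a + 2 <= k
                                    & q = run (dfa_s A) (drop a p)]]].

Lemma accS_ok (Sigma : finType) (L : lang Sigma) (A : dfa Sigma)
  (HA : forall w, L w <-> dfa_accept A w) p (x : st A) :
  Inv L p x -> accS x <-> Scl L p.
Proof.
case: x => [[[[[d b1] b2] T1] T2] G] [-> _ -> [_ _ HG]] /=.
split.
- move=> HH; apply/S_pref; move: HH.
  case/orP => [/andP [H1 H2]|/existsP [q /andP [/HG [k [a [Hk Hs Ha ->]]] Hq]]].
    by left; split => //; apply/HA.
  by right; exists k, a; split => //; apply/HA.
- move/S_pref; case => [[/HA H1 H2]|[k [a [Hk Hs Ha Hd]]]].
    by rewrite H2; apply/orP; left; exact: H1.
  apply/orP; right; apply/existsP; exists (run (dfa_s A) (drop a p)).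
  apply/andP; split; last exact/HA.
  by apply/HG; exists k, a.
Qed.

Lemma inv_step (Sigma : finType) (L : lang Sigma) (A : dfa Sigma)
  (HA : forall w, L w <-> dfa_accept A w) p c (x : st A) :
  Inv L p x -> Inv L (rcons p c) (stp x c).
Proof.
move=> Hx; have Hacc := accS_ok HA Hx.
move: Hx; case: x Hacc => [[[[[d b1] b2] T1] T2] G] Hacc [Ed Eb1 Eb2 [H1 H2 HG]].
subst d b1 b2.
have runr : forall a, a <= size p ->
    run (dfa_s A) (drop a (rcons p c)) = dfa_trans (run (dfa_s A) (drop a p)) c.
  by move=> a Ha; rewrite drop_rcons // /run foldl_rcons.
rewrite /= size_rcons; split => //; first by rewrite /run foldl_rcons.
split.
- move=> q; split.
    case/imsetP => y /setU1P [->|/H1 [a Ha ->]] ->.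
      by exists (size p) => //; rewrite runr // drop_size.
    by exists a; [exact: ltn_trans Ha _|rewrite runr // ltnW].
  case=> a; rewrite ltnS => Ha ->; rewrite runr //.
  apply/imsetP; exists (run (dfa_s A) (drop a p)) => //.
  case: (ltnP a (size p)) => Hap.
    by apply/setU1P; right; apply/H1; exists a.
  have -> : a = size p by apply/eqP; rewrite eqn_leq Ha Hap.
  by rewrite drop_size; apply/setU1P; left.
- move=> q; split.
    case/imsetP => y /H1 [a Ha ->] ->.
    by exists a; [|rewrite runr // ltnW].
  case=> a; rewrite ltnS => Ha ->; rewrite runr ?(ltnW Ha) //.
  by apply/imsetP; exists (run (dfa_s A) (drop a p)) => //; apply/H1; exists a.
- move=> q; split.
    case/setUP.
      case/imsetP => y /HG [k [a [Hk Hs Ha ->]]] ->.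
      exists k, a; split => //; first exact: ltn_trans Hk _.
        by rewrite -cats1 takel_cat // ltnW.
      rewrite runr // (leq_trans _ (ltnW Hk)) //.
      by apply: leq_trans Ha; rewrite leq_addr.
    case: ifP => [/Hacc Hp|]; last by rewrite inE.
    case/imsetP => y /H2 [a Ha ->] ->.
    exists (size p), a; split => //.
      by rewrite -cats1 take_size_cat.
      by rewrite addn2.
    by rewrite runr // ltnW // ltnW.
  case=> k [a [Hk Hs Ha ->]].
  have Hap : a < size p.
    have Hk' : k <= size p by rewrite -ltnS.
    by apply: leq_trans Hk'; apply: ltnW; rewrite -addn2.
  rewrite runr; last exact: ltnW.
  rewrite ltnS leq_eqVlt in Hk; case/orP: Hk => [/eqP Ek|Hk].
    rewrite Ek -cats1 take_size_cat // in Hs.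
    have HA' : accS (run (dfa_s A) p, 0 < size p, 1 < size p, T1, T2, G) = true.
      exact/Hacc.
    simpl in HA'; rewrite HA'.
    apply/setUP; right; apply/imsetP; exists (run (dfa_s A) (drop a p)) => //.
    by apply/H2; exists a => //; rewrite -Ek -addn2.
  rewrite -cats1 takel_cat in Hs; last exact: ltnW.
  apply/setUP; left; apply/imsetP; exists (run (dfa_s A) (drop a p)) => //.
  by apply/HG; exists k, a.
Qed.

Lemma inv_all (Sigma : finType) (L : lang Sigma) (A : dfa Sigma)
  (HA : forall w, L w <-> dfa_accept A w) p :
  Inv L p (foldl (@stp _ A) (dfa_s A, false, false, set0, set0, set0) p).
Proof.
elim/last_ind: p => [|p c IH].
  rewrite /=; split => //; split => q; rewrite inE; split => //.
  - by case.
  - by case.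
  - by case=> k [a []].
by rewrite foldl_rcons; apply: inv_step.
Qed.

Theorem lemma4p10 (Sigma : finType) (L : lang Sigma) :
  regular L -> regular (OC2_star L).
Proof.
case=> A HA; exists (bigA A) => w.
rewrite /dfa_accept /=.
have := inv_all HA w.
case: (foldl _ _ w) => [[[[[d b1] b2] T1] T2] G] [-> _ _ [_ _ HG]].
rewrite inE /=; split.
- case=> i /iter_S [Lw|Sw].
    by apply/orP; left; apply/HA.
  case/S_pref: Sw => [[Lw _]|[k [a [Hk Hs Ha Ld]]]].
    by apply/orP; left; apply/HA.
  apply/orP; right; apply/existsP; exists (run (dfa_s A) (drop a w)).
  apply/andP; split; last exact/HA.
  by apply/HG; exists k, a.
- case/orP => [Hw|/existsP [q /andP [/HG [k [a [Hk Hs Ha ->]]] Hq]]].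
    by exists 0; apply/HA.
  apply: S_iter; apply/S_pref; right; exists k, a; split => //.
  exact/HA.
Qed.
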